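(* Let $a>b\geq c>d>0$ and let $p,q$ be real numbers with $p,q\notin\{0,-1\}$. If $ad-bc>0$, then $$\left(\frac{L_p(a,b)}{L_p(c,d)}\right)^p\geq \left(\frac{L_q(a,b)}{L_q(c,d)}\right)^q\left(\frac{I(a^{q+1},b^{q+1})}{I(c^{q+1},d^{q+1})}\right)^{\frac{p-q}{q+1}}.$$ If $ad-bc<0$, the reverse inequality holds. Equality holds if and only if $ad-bc=0$ or $p=q$.
   Context: For $u,v>0$: the identric mean is $I(u,v)=\frac{1}{e}\left(\frac{u^u}{v^v}\right)^{1/(u-v)}$ if $u\neq v$ and $I(u,u)=u$; for $p\neq 0,-1$ the $p$-logarithmic mean is $L_p(u,v)=\left(\frac{u^{p+1}-v^{p+1}}{(p+1)(u-v)}\right)^{1/p}$ if $u\neq v$ and $L_p(u,u)=u$. *)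

(* Defs.v *)
From Stdlib Require Export Reals.
Open Scope R_scope.

Definition identric (u v : R) : R :=
  if Req_dec_T u v then u
  else / exp 1 * Rpower (Rpower u u / Rpower v v) (/ (u - v)).

Definition plog (p u v : R) : R :=
  if Req_dec_T u v then u
  else Rpower ((Rpower u (p + 1) - Rpower v (p + 1)) / ((p + 1) * (u - v))) (/ p).

(* Main.v *)
Require Import Defs.
From Coquelicot Require Import Coquelicot.
From Stdlib Require Import Reals Lra Psatz.
Open Scope R_scope.

Definition Bf t := t * exp t / (exp t - 1).
Definition Bd t := exp t / (exp t - 1) - t * exp t / (exp t - 1)^2.
Definition Ef t := Bf t - t/2.
Definition Ed t := Bd t - 1/2.
Definition Edd t := exp t * (t * (exp t + 1) - 2 * (exp t - 1)) / (exp t - 1)^3.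

Lemma exp_ne1 t : t <> 0 -> exp t - 1 <> 0.
Proof. intros H E. apply H. rewrite <- exp_0 in E. apply exp_inv. lra. Qed.

Lemma der_Ef t : t <> 0 -> is_derive Ef t (Ed t).
Proof.
  intros H. pose proof (exp_ne1 t H). unfold Ef, Bf, Ed, Bd.
  auto_derive. auto. field. auto.
Qed.

Lemma der_Ed t : t <> 0 -> is_derive Ed t (Edd t).
Proof.
  intros H. pose proof (exp_ne1 t H). unfold Edd, Ed, Bd.
  auto_derive. repeat split; auto. field. auto.
Qed.

Lemma pos_from0 (f f' : R -> R) : (forall x, is_derive f x (f' x)) ->
  (forall x, 0 < x -> f' x > 0) -> forall t, 0 < t -> f 0 < f t.
Proof.
  intros Hd Hp t Ht.
  destruct (MVT_cor2 f f' 0 t Ht) as [c [Hc1 Hc2]].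
  { intros c _. apply is_derive_Reals. apply Hd. }
  assert (f' c * (t - 0) > 0). { apply Rmult_lt_0_compat. apply Hp; lra. lra. }
  lra.
Qed.

Lemma f3_pos t : 0 < t -> 1 - exp t + t * exp t > 0.
Proof.
  intros Ht.
  pose proof (pos_from0 (fun t => 1 - exp t + t * exp t) (fun t => t * exp t)) as H.
  simpl in H. rewrite exp_0 in H.
  assert (1 - 1 + 0 * 1 < 1 - exp t + t * exp t); [|lra].
  apply H; auto.
  - intros x. auto_derive. auto. ring.
  - intros x Hx. apply Rmult_lt_0_compat; auto. apply exp_pos.
Qed.

Lemma f2_pos t : 0 < t -> t * (exp t + 1) - 2 * (exp t - 1) > 0.
Proof.
  intros Ht.
  pose proof (pos_from0 (fun t => t * (exp t + 1) - 2 * (exp t - 1)) (fun t => 1 - exp t + t * exp t)) as H.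
  simpl in H. rewrite exp_0 in H.
  assert (0 * (1 + 1) - 2 * (1 - 1) < t * (exp t + 1) - 2 * (exp t - 1)); [|lra].
  apply H; auto.
  - intros x. auto_derive. auto. ring.
  - intros x Hx. apply f3_pos; auto.
Qed.

Lemma f1_pos t : 0 < t -> exp t * exp t - 1 - 2 * t * exp t > 0.
Proof.
  intros Ht.
  pose proof (pos_from0 (fun t => exp t * exp t - 1 - 2 * t * exp t) (fun t => 2 * exp t * (exp t - 1 - t))) as H.
  simpl in H. rewrite exp_0 in H.
  assert (1 * 1 - 1 - 2 * 0 * 1 < exp t * exp t - 1 - 2 * t * exp t); [|lra].
  apply H; auto.
  - intros x. auto_derive. auto. ring.
  - intros x Hx. pose proof (exp_ineq1 x ltac:(lra)). pose proof (exp_pos x).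
    apply Rmult_lt_0_compat; [|lra]. lra.
Qed.

Lemma exp_gt1 t : 0 < t -> exp t - 1 > 0.
Proof. intros. pose proof (exp_ineq1 t ltac:(lra)). lra. Qed.

Lemma Ed_pos t : 0 < t -> Ed t > 0.
Proof.
  intros Ht. pose proof (exp_gt1 t Ht). pose proof (f1_pos t Ht).
  unfold Ed, Bd.
  replace (exp t / (exp t - 1) - t * exp t / (exp t - 1) ^ 2 - 1 / 2)
    with ((exp t * exp t - 1 - 2 * t * exp t) / (2 * (exp t - 1)^2)) by (field; lra).
  apply Rdiv_lt_0_compat; auto. nra.
Qed.

Lemma Edd_pos t : 0 < t -> Edd t > 0.
Proof.
  intros Ht. pose proof (exp_gt1 t Ht). pose proof (f2_pos t Ht). pose proof (exp_pos t).
  unfold Edd. apply Rdiv_lt_0_compat.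
  apply Rmult_lt_0_compat; lra. apply pow_lt. lra.
Qed.

Lemma Ed_incr x y : 0 < x -> x < y -> Ed x < Ed y.
Proof.
  intros Hx Hxy.
  apply (incr_function Ed (Finite 0) p_infty Edd); simpl; auto.
  - intros z Hz _. apply der_Ed; lra.
  - intros z Hz _. apply Edd_pos; lra.
Qed.

Lemma tang_pos x y : 0 < x -> 0 < y -> x <> y -> Ef x - Ef y - (x - y) * Ed y > 0.
Proof.
  intros Hx Hy Hne.
  destruct (Rlt_or_le x y) as [H|H].
  - destruct (MVT_cor2 Ef Ed x y H) as [c [Hc1 Hc2]].
    { intros c Hc. apply is_derive_Reals. apply der_Ef. lra. }
    pose proof (Ed_incr c y ltac:(lra) ltac:(lra)). nra.
  - assert (y < x) by lra.
    destruct (MVT_cor2 Ef Ed y x H0) as [c [Hc1 Hc2]].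
    { intros c Hc. apply is_derive_Reals. apply der_Ef. lra. }
    pose proof (Ed_incr y c ltac:(lra) ltac:(lra)). nra.
Qed.

Lemma Ef_even t : t <> 0 -> Ef (- t) = Ef t.
Proof.
  intros H. pose proof (exp_ne1 t H). pose proof (exp_pos t).
  assert (exp (-t) - 1 <> 0) by (apply exp_ne1; lra).
  unfold Ef, Bf in *. rewrite exp_Ropp in *. field. repeat split; lra.
Qed.

Lemma Ed_odd t : t <> 0 -> Ed (- t) = - Ed t.
Proof.
  intros H. pose proof (exp_ne1 t H). pose proof (exp_pos t).
  unfold Ed, Bd in *. rewrite exp_Ropp in *. field. repeat split; lra.
Qed.

Lemma key_tang x y : x <> 0 -> y <> 0 -> x <> y -> Ef x - Ef y - (x - y) * Ed y > 0.
Proof.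
  intros Hx Hy Hne.
  assert (gen : forall x y, x <> 0 -> 0 < y -> x <> y -> Ef x - Ef y - (x - y) * Ed y > 0).
  { clear. intros x y Hx Hy Hne.
    destruct (Rlt_or_le 0 x) as [H|H].
    - apply tang_pos; auto.
    - assert (x < 0) by lra.
      rewrite <- (Ef_even x) by auto.
      pose proof (Ed_pos y Hy).
      destruct (Req_dec (-x) y) as [E|E].
      + rewrite E. nra.
      + pose proof (tang_pos (-x) y ltac:(lra) Hy E). nra. }
  destruct (Rlt_or_le 0 y) as [H|H]; [apply gen; auto|].
  assert (y < 0) by lra.
  pose proof (gen (-x) (-y) ltac:(lra) ltac:(lra) ltac:(lra)).
  rewrite Ef_even, Ef_even, Ed_odd in H1 by auto. nra.
Qed.

Definition Dfun s r x := ln ((exp (s*x) - 1)/s) - ln ((exp (r*x) - 1)/r)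
  - (s - r) * x * exp (r*x) / (exp (r*x) - 1).
Definition Dder s r x := s*exp(s*x)/(exp(s*x)-1) - r*exp(r*x)/(exp(r*x)-1)
  - (s-r)*(exp(r*x)/(exp(r*x)-1) - x*r*exp(r*x)/(exp(r*x)-1)^2).

Lemma quot_pos s x : s <> 0 -> 0 < x -> (exp (s*x) - 1)/s > 0.
Proof.
  intros Hs Hx. destruct (Rlt_or_le 0 s) as [H|H].
  - apply Rdiv_lt_0_compat; auto. apply exp_gt1. nra.
  - assert (s < 0) by lra. assert (exp (s*x) < exp 0) by (apply exp_increasing; nra).
    rewrite exp_0 in H1.
    replace ((exp (s*x) - 1)/s) with ((1 - exp (s*x)) / (-s)) by (field; lra).
    apply Rdiv_lt_0_compat; lra.
Qed.

Lemma der_D s r x : s <> 0 -> r <> 0 -> 0 < x -> is_derive (Dfun s r) x (Dder s r x).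
Proof.
  intros Hs Hr Hx. pose proof (quot_pos s x Hs Hx). pose proof (quot_pos r x Hr Hx).
  assert (exp (s*x) - 1 <> 0) by (apply exp_ne1; nra).
  assert (exp (r*x) - 1 <> 0) by (apply exp_ne1; nra).
  unfold Dfun, Dder. auto_derive.
  - repeat split; auto.
  - field. repeat split; auto.
Qed.

Lemma Dder_eq s r x : s <> 0 -> r <> 0 -> 0 < x ->
  x * Dder s r x = Ef (s*x) - Ef (r*x) - (s*x - r*x) * Ed (r*x).
Proof.
  intros Hs Hr Hx.
  assert (exp (s*x) - 1 <> 0) by (apply exp_ne1; nra).
  assert (exp (r*x) - 1 <> 0) by (apply exp_ne1; nra).
  unfold Dder, Ef, Bf, Ed, Bd. field. auto.
Qed.

Lemma D_incr s r x y : s <> 0 -> r <> 0 -> s <> r -> 0 < x -> x < y -> Dfun s r x < Dfun s r y.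
Proof.
  intros Hs Hr Hsr Hx Hxy.
  apply (incr_function (Dfun s r) (Finite 0) p_infty (Dder s r)); simpl; auto.
  - intros z Hz _. apply der_D; auto.
  - intros z Hz _. pose proof (Dder_eq s r z Hs Hr Hz).
    pose proof (key_tang (s*z) (r*z)). 
    assert (Ef (s * z) - Ef (r * z) - (s * z - r * z) * Ed (r * z) > 0).
    { apply H0; intro E. apply Hs; nra. apply Hr; nra. apply Hsr.
      apply Rmult_eq_reg_r with z; lra. }
    nra.
Qed.

Lemma D_same s x : Dfun s s x = 0.
Proof. unfold Dfun. rewrite Rminus_diag. unfold Rdiv. ring. Qed.

Lemma lnX a b s : a > b -> b > 0 -> s <> 0 ->
  (Rpower a s - Rpower b s) / (s * (a - b)) > 0 /\
  ln ((Rpower a s - Rpower b s) / (s * (a - b))) =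
    s * ln b + ln ((exp (s * (ln a - ln b)) - 1) / s) - ln (a - b).
Proof.
  intros Hab Hb Hs.
  assert (Hal : ln a - ln b > 0) by (pose proof (ln_increasing b a Hb Hab); lra).
  pose proof (quot_pos s (ln a - ln b) Hs Hal) as Hq.
  pose proof (exp_pos (s * ln b)) as He.
  assert (E : (Rpower a s - Rpower b s) / (s * (a - b)) =
     exp (s * ln b) * ((exp (s * (ln a - ln b)) - 1) / s) * / (a - b)).
  { unfold Rpower. replace (s * ln a) with (s * ln b + s * (ln a - ln b)) by ring.
    rewrite exp_plus. field. split; lra. }
  rewrite E. split.
  - apply Rmult_lt_0_compat. apply Rmult_lt_0_compat; auto. apply Rinv_0_lt_compat; lra.
  - rewrite ln_mult, ln_mult, ln_exp, ln_Rinv; try lra; auto.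
    apply Rmult_lt_0_compat; auto. apply Rinv_0_lt_compat; lra.
Qed.

Lemma identric_gen u v : u > 0 -> v > 0 -> u <> v ->
  identric u v = exp (-1 + (u * ln u - v * ln v) / (u - v)).
Proof.
  intros Hu Hv Hne. unfold identric.
  destruct (Req_dec_T u v) as [E|E]; [contradiction|].
  unfold Rpower. rewrite <- exp_Ropp at 1.
  rewrite <- exp_plus. f_equal.
  unfold Rdiv at 1.
  rewrite ln_mult by (apply exp_pos || apply Rinv_0_lt_compat, exp_pos).
  rewrite ln_Rinv by apply exp_pos. rewrite !ln_exp. field. lra.
Qed.

Lemma identric_val a b r : a > b -> b > 0 -> r <> 0 ->
  identric (Rpower a r) (Rpower b r) =
  exp (-1 + (r * ln b + r * (ln a - ln b) * exp (r * (ln a - ln b)) / (exp (r * (ln a - ln b)) - 1))).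
Proof.
  intros Hab Hb Hr.
  assert (Hal : ln a - ln b > 0) by (pose proof (ln_increasing b a Hb Hab); lra).
  assert (Hne : exp (r * (ln a - ln b)) - 1 <> 0) by (apply exp_ne1; nra).
  pose proof (exp_pos (r * ln b)) as He.
  assert (Hua : Rpower a r = exp (r * ln b) * exp (r * (ln a - ln b))).
  { unfold Rpower. rewrite <- exp_plus. f_equal. ring. }
  assert (Hu : ln (Rpower a r) = r * ln b + r * (ln a - ln b)).
  { unfold Rpower. rewrite ln_exp. ring. }
  assert (Hv : ln (Rpower b r) = r * ln b) by (unfold Rpower; apply ln_exp).
  rewrite identric_gen.
  - f_equal. f_equal. rewrite Hu, Hv, Hua. unfold Rpower. field.
    split; auto. intro E. apply Hne. apply Rmult_eq_reg_l with (exp (r * ln b)); lra.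
  - unfold Rpower; apply exp_pos.
  - unfold Rpower; apply exp_pos.
  - rewrite Hua. unfold Rpower. intro E. apply Hne.
    apply Rmult_eq_reg_l with (exp (r * ln b)); lra.
Qed.

Lemma plog_val p a b : a > b -> b > 0 -> p <> 0 -> p <> -1 ->
  plog p a b = exp (/ p * ln ((Rpower a (p+1) - Rpower b (p+1)) / ((p+1) * (a - b)))).
Proof.
  intros Hab Hb Hp Hp1. unfold plog.
  destruct (Req_dec_T a b); [lra|]. reflexivity.
Qed.

Lemma Rpower_exp_ratio x y e : Rpower (exp x / exp y) e = exp (e * (x - y)).
Proof.
  unfold Rpower, Rdiv. rewrite <- exp_Ropp, <- exp_plus, ln_exp. f_equal.
Qed.

Lemma ln_diff a b c d : a > 0 -> b > 0 -> c > 0 -> d > 0 ->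
  (ln a - ln b) - (ln c - ln d) = ln (a * d) - ln (b * c).
Proof. intros. rewrite !ln_mult by auto. ring. Qed.

Lemma sign_rel a b c d : a > 0 -> b > 0 -> c > 0 -> d > 0 ->
  (a * d - b * c > 0 -> ln a - ln b > ln c - ln d) /\
  (a * d - b * c < 0 -> ln a - ln b < ln c - ln d) /\
  (a * d - b * c = 0 <-> ln a - ln b = ln c - ln d).
Proof.
  intros Ha Hb Hc Hd. pose proof (ln_diff a b c d Ha Hb Hc Hd).
  assert (0 < a * d) by nra. assert (0 < b * c) by nra.
  split; [|split].
  - intros. pose proof (ln_increasing (b*c) (a*d)). nra.
  - intros. pose proof (ln_increasing (a*d) (b*c)). nra.
  - split; intro Heq.
    + assert (Em : a * d = b * c) by lra. rewrite Em in H. lra.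
    + assert (Em : ln (a*d) = ln (b*c)) by lra. apply ln_inv in Em; auto. lra.
Qed.

Theorem theorem3p3 (a b c d p q : R) :
  a > b -> b >= c -> c > d -> d > 0 ->
  p <> 0 -> p <> -1 -> q <> 0 -> q <> -1 ->
  let lhs := Rpower (plog p a b / plog p c d) p in
  let rhs := Rpower (plog q a b / plog q c d) q *
             Rpower (identric (Rpower a (q + 1)) (Rpower b (q + 1)) /
                     identric (Rpower c (q + 1)) (Rpower d (q + 1)))
                    ((p - q) / (q + 1)) in
  (a * d - b * c > 0 -> lhs >= rhs) /\
  (a * d - b * c < 0 -> lhs <= rhs) /\
  (lhs = rhs <-> (a * d - b * c = 0 \/ p = q)).
Proof.
  intros Hab Hbc Hcd Hd Hp Hp1 Hq Hq1 lhs rhs.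
  assert (Hs : p + 1 <> 0) by lra. assert (Hr : q + 1 <> 0) by lra.
  destruct (lnX a b (p+1) Hab ltac:(lra) Hs) as [_ Ls1].
  destruct (lnX c d (p+1) Hcd Hd Hs) as [_ Ls2].
  destruct (lnX a b (q+1) Hab ltac:(lra) Hr) as [_ Lr1].
  destruct (lnX c d (q+1) Hcd Hd Hr) as [_ Lr2].
  assert (Hal : ln a - ln b > 0) by (pose proof (ln_increasing b a ltac:(lra) Hab); lra).
  assert (Hbe : ln c - ln d > 0) by (pose proof (ln_increasing d c Hd Hcd); lra).
  set (P := Dfun (p+1) (q+1) (ln a - ln b)).
  set (Q := Dfun (p+1) (q+1) (ln c - ln d)).
  set (Z := ln ((Rpower a (p + 1) - Rpower b (p + 1)) / ((p + 1) * (a - b))) - ln ((Rpower c (p + 1) - Rpower d (p + 1)) / ((p + 1) * (c - d))) - P).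
  assert (Hea : exp ((q+1) * (ln a - ln b)) - 1 <> 0) by (apply exp_ne1; nra).
  assert (Hec : exp ((q+1) * (ln c - ln d)) - 1 <> 0) by (apply exp_ne1; nra).
  assert (Hlhs : lhs = exp (P + Z)).
  { unfold lhs. rewrite !plog_val by lra. rewrite Rpower_exp_ratio. f_equal.
    unfold Z. field. auto. }
  assert (Hrhs : rhs = exp (Q + Z)).
  { unfold rhs. rewrite !plog_val by lra. rewrite Rpower_exp_ratio.
    rewrite !identric_val by lra. rewrite Rpower_exp_ratio. rewrite <- exp_plus. f_equal.
    unfold Z, P, Q, Dfun. rewrite Ls1, Ls2, Lr1, Lr2. field. repeat split; auto. }
  destruct (sign_rel a b c d ltac:(lra) ltac:(lra) ltac:(lra) Hd) as [S1 [S2 S3]].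
  assert (Hmono : p <> q -> forall x y, 0 < x -> x < y -> Dfun (p+1) (q+1) x < Dfun (p+1) (q+1) y).
  { intros Hpq x y Hx Hxy. apply D_incr; auto. lra. }
  assert (Hsame : p = q -> P = Q).
  { intros ->. unfold P, Q. rewrite !D_same. auto. }
  rewrite Hlhs, Hrhs.
  split; [|split].
  - intros H. destruct (Req_dec p q) as [E|E].
    + rewrite (Hsame E). lra.
    + pose proof (Hmono E _ _ Hbe (S1 H)). fold P Q in H0.
      left. apply exp_increasing. lra.
  - intros H. destruct (Req_dec p q) as [E|E].
    + rewrite (Hsame E). lra.
    + pose proof (Hmono E _ _ Hal (S2 H)). fold P Q in H0.
      left. apply exp_increasing. lra.
  - split.
    + intros E. apply exp_inv in E. destruct (Req_dec p q) as [E'|E']; [right; auto|left].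
      apply S3. destruct (Rtotal_order (ln a - ln b) (ln c - ln d)) as [L|[L|L]]; auto.
      * pose proof (Hmono E' _ _ Hal L). fold P Q in H. lra.
      * pose proof (Hmono E' _ _ Hbe L). fold P Q in H. lra.
    + intros [H|H].
      * apply S3 in H. unfold P, Q. rewrite H. auto.
      * rewrite (Hsame H). auto.
Qed.
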